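(* Let $A$ be a nonempty set of positive integers, let $s\in A$ and let $n$ be a positive integer. Then $$\sum_{j\ge0}(-1)^jN^q_A(n-js)=N^q_{A\setminus\{s\}}(n)+\sum_{j\ge1}(-1)^{j-1}q_{A\setminus\{s\}}(n-js),$$ i.e. $N^q_A(n)-N^q_A(n-s)+N^q_A(n-2s)-\cdots=N^q_{A\setminus\{s\}}(n)+q_{A\setminus\{s\}}(n-s)-q_{A\setminus\{s\}}(n-2s)+\cdots$.
   Context: For a set $B$ of positive integers, $N^q_B(m)$ is the total number of parts, summed over all partitions of $m$ into pairwise distinct parts from $B$, and $q_B(m)$ is the number of such partitions. Conventions: $q_B(0)=1$, $N^q_B(0)=0$, $q_B(m)=N^q_B(m)=0$ for $m<0$. *)

(* Defs.v *)
From mathcomp Require Import all_boot all_order all_algebra.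
Set Implicit Arguments. Unset Strict Implicit. Unset Printing Implicit Defensive.
Import Order.TTheory GRing.Theory Num.Theory.

(* A partition of m into pairwise distinct parts from B is a finite set S of
   positive integers (all parts are <= m, so S : {set 'I_m.+1}) whose elements
   all lie in B and whose sum is m. *)
Definition distinct_parts (B : pred nat) (m : nat) : {set {set 'I_m.+1}} :=
  [set S : {set 'I_m.+1} |
     [forall i in S, (0 < (i : nat)) && B i] && ((\sum_(i in S) (i : nat)) == m)].

Definition qB (B : pred nat) (m : nat) : nat := #|distinct_parts B m|.

Definition NqB (B : pred nat) (m : nat) : nat :=
  \sum_(S in distinct_parts B m) #|S|.

Definition qZ (B : pred nat) (m : int) : int :=
  match m with Posz k => (qB B k)%:Z | Negz _ => 0%R end.
Definition NqZ (B : pred nat) (m : int) : int :=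
  match m with Posz k => (NqB B k)%:Z | Negz _ => 0%R end.

(* Main.v *)
Require Import Defs.
From mathcomp Require Import all_boot all_order all_algebra.
From mathcomp Require Import zify ring.
Import Order.TTheory GRing.Theory Num.Theory.
Set Implicit Arguments. Unset Strict Implicit. Unset Printing Implicit Defensive.

Definition good (N : nat) (B : pred nat) (m : nat) (S : {set 'I_N.+1}) : bool :=
  [forall i in S, (0 < (i : nat)) && B i] && ((\sum_(i in S) (i : nat)) == m).

Definition G (N : nat) (B : pred nat) (m : nat) (F : nat -> nat) : nat :=
  \sum_(S : {set 'I_N.+1} | good B m S) F #|S|.

Lemma NqB_G B m : NqB B m = G m B m id.
Proof. by rewrite /NqB /G; apply: eq_bigl => S; rewrite inE. Qed.

Lemma qB_G B m : qB B m = G m B m (fun _ => 1%N).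
Proof.
rewrite /qB /G -sum1_card; apply: eq_bigl => S; by rewrite inE.
Qed.

Lemma good_le N B m (S : {set 'I_N.+1}) i : good B m S -> i \in S -> (i <= m)%N.
Proof.
case/andP=> _ /eqP <- iS.
by rewrite (bigD1 i) //= leq_addr.
Qed.

Lemma G_widen N B m F : (m <= N)%N -> G N B m F = G m B m F.
Proof.
move=> mN.
have le : (m.+1 <= N.+1)%N by [].
pose f := @widen_ord m.+1 N.+1 le.
have finj : injective f.
  by move=> x y /(congr1 val) /= /val_inj.
rewrite /G (reindex_onto (fun T : {set 'I_m.+1} => f @: T) (fun S => f @^-1: S)).
  apply: eq_big => T.
    have -> : f @^-1: (f @: T) == T.
      by apply/eqP/setP => x; rewrite inE mem_imset.
    rewrite andbT /good big_imset /=; last by move=> x y _ _; apply: finj.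
    congr andb.
    apply/forallP/forallP => H x; apply/implyP => xT.
      by have := H (f x); rewrite mem_imset // xT.
    case/imsetP: xT => y yT ->; by have := H y; rewrite yT.
  by move=> _; rewrite card_imset.
move=> S gS; apply/setP => x; apply/imsetP/idP.
  by case=> y; rewrite inE => yS ->.
move=> xS; have xm : (x < m.+1)%N by rewrite ltnS (good_le gS xS).
exists (Ordinal xm); first by rewrite inE; have -> : f (Ordinal xm) = x by apply: val_inj.
by apply: val_inj.
Qed.
Lemma G_decomp N (A : pred nat) s m F : (0 < s)%N -> A s -> (s <= N)%N ->
  G N A m F = (G N [pred x | A x && (x != s)] m F +
     (if (s <= m)%N then G N [pred x | A x && (x != s)] (m - s) (fun k => F k.+1) else 0))%N.
Proof.
move=> s0 As sN.
have sN1 : (s < N.+1)%N by [].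
pose so : 'I_N.+1 := Ordinal sN1.
rewrite /G (bigID (fun S : {set 'I_N.+1} => so \in S)) /= addnC.
congr addn.
  apply: eq_bigl => S; rewrite /good.
  case: (boolP (so \in S)) => sS /=.
    rewrite andbF; symmetry; apply/andP => -[/forallP H _].
    by have := H so; rewrite sS /= eqxx !andbF.
  rewrite andbT; congr andb; apply: eq_forallb => i.
  case: (boolP (i \in S)) => //= iS.
  have -> : (i : nat) != s by apply: contraNneq sS => e; have -> : so = i by apply: val_inj.
  by rewrite andbT.
rewrite (reindex_onto (fun T => so |: T) (fun S => S :\ so)); last by move=> S /andP[_ sS]; apply: setD1K.
have E : forall T : {set 'I_N.+1}, ((good A m (so |: T) && (so \in so |: T)) && ((so |: T) :\ so == T))
   = (s <= m)%N && good [pred x | A x && (x != s)] (m - s) T.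
  move=> T; rewrite setU11 andbT /good.
  case: (boolP (so \in T)) => sT.
    have -> : (so |: T) :\ so == T = false.
      by apply/negbTE; apply/eqP => /setP /(_ so); rewrite !inE eqxx sT.
    rewrite andbF; symmetry; apply/negbTE; rewrite negb_and; apply/orP; right.
    rewrite negb_and; apply/orP; left; apply/forallP => /(_ so); rewrite sT /= eqxx.
    by rewrite !andbF.
  rewrite setU1K // eqxx andbT big_setU1 //=.
  have -> : [forall i in so |: T, (0 < (i:nat))%N && A i] =
      [forall i in T, (0 < (i:nat))%N && (A i && ((i:nat) != s))].
    apply/forallP/forallP => H i; apply/implyP => iT.
      have iso : i != so by apply: contraNneq sT => <-.
      have := H i; rewrite !inE iT orbT /= => /andP[-> ->] /=.
      by apply: contra iso => /eqP e; apply/eqP/val_inj.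
    move: iT; rewrite !inE => /orP[/eqP -> | iT] /=; first by rewrite s0 As.
    by have := H i; rewrite iT /= => /andP[-> /andP[-> _]].
  case: (leqP s m) => sm /=.
    congr andb; apply/eqP/eqP => [<-|->]; [by rewrite addKn | by rewrite subnKC].
  by rewrite andbC; apply/negbTE; apply/negP => /andP[/eqP H _]; move: sm; rewrite -H ltnNge leq_addr.
under eq_bigl do rewrite E.
case: (leqP s m) => sm /=.
  apply: eq_bigr => T gT.
  congr F; rewrite cardsU1.
  have -> : so \notin T by apply/negP => sT; case/andP: gT => /forallP H _; have := H so; rewrite sT /= eqxx !andbF.
  by [].
by rewrite big_pred0.
Qed.

Lemma rec_nat (A : pred nat) s n m : (0 < s)%N -> A s -> (m <= n)%N ->
  NqB A m = (NqB [pred x | A x && (x != s)] m +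
    (if (s <= m)%N then NqB [pred x | A x && (x != s)] (m - s) + qB [pred x | A x && (x != s)] (m - s) else 0))%N.
Proof.
move=> s0 As mn.
have mN : (m <= n + s)%N by lia.
rewrite !NqB_G -(@G_widen (n + s)) // (@G_decomp (n + s) A s) //; last by lia.
rewrite -(@G_widen (n + s)) //.
case: (leqP s m) => sm //.
rewrite qB_G -!(@G_widen (n + s)); try lia.
rewrite /G -big_split /=; congr addn; apply: eq_bigr => S _; by rewrite addn1.
Qed.

Local Open Scope ring_scope.

Lemma NqZ_eval B (n j s : nat) : NqZ B (n%:Z - (j * s)%:Z) =
  if (j * s <= n)%N then (NqB B (n - j * s))%:Z else 0%R.
Proof.
case: leqP => h; first by rewrite subzn.
have : (n%:Z - (j * s)%:Z < 0)%R by rewrite subr_lt0 ltz_nat.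
by case: (n%:Z - (j * s)%:Z).
Qed.

Lemma qZ_eval B (n j s : nat) : qZ B (n%:Z - (j * s)%:Z) =
  if (j * s <= n)%N then (qB B (n - j * s))%:Z else 0%R.
Proof.
case: leqP => h; first by rewrite subzn.
have : (n%:Z - (j * s)%:Z < 0)%R by rewrite subr_lt0 ltz_nat.
by case: (n%:Z - (j * s)%:Z).
Qed.


Lemma telescope (a b c : nat -> int) :
  (forall j, a j = b j + b j.+1 + c j.+1) ->
  forall k, \sum_(0 <= j < k) (-1) ^+ j * a j =
    b 0%N - (-1) ^+ k * b k + \sum_(1 <= j < k.+1) (-1) ^+ (j.-1) * c j.
Proof.
move=> H; elim=> [|k IH].
  by rewrite !big_geq // expr0 mul1r subrr addr0.
rewrite big_nat_recr //= IH [in RHS]big_nat_recr //= H exprS.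
rewrite !mulrDr !mulN1r !mulNr.
move: (\sum_(_ <= _ < _) _) ((-1) ^+ k) => X p.
rewrite opprK. lia.
Qed.

Theorem theorem6 (A : pred nat) (s n : nat) :
  (forall a, A a -> (0 < a)%N) ->
  (exists a, A a) ->
  A s ->
  (0 < n)%N ->
  \sum_(0 <= j < n.+1) (-1) ^+ j * NqZ A (n%:Z - (j * s)%:Z)
  = NqZ [pred x | A x && (x != s)] n%:Z
    + \sum_(1 <= j < n.+1) (-1) ^+ (j.-1) * qZ [pred x | A x && (x != s)] (n%:Z - (j * s)%:Z).
Proof.
move=> Apos _ As n0.
have s0 := Apos s As.
set B := [pred x | A x && (x != s)].
pose b j := NqZ B (n%:Z - (j * s)%:Z).
pose c j := qZ B (n%:Z - (j * s)%:Z).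
have H : forall j, NqZ A (n%:Z - (j * s)%:Z) = b j + b j.+1 + c j.+1.
  move=> j; rewrite /b /c !NqZ_eval qZ_eval.
  case: (leqP (j * s) n) => h1.
    rewrite (@rec_nat A s n (n - j * s)) //; last by lia.
    case: (leqP (j.+1 * s) n) => h2.
      have -> : (s <= n - j * s)%N by rewrite mulSn in h2; lia.
      have -> : (n - j.+1 * s = n - j * s - s)%N by rewrite mulSn; lia.
      by rewrite !PoszD addrA.
    have -> : (s <= n - j * s)%N = false by rewrite mulSn in h2; lia.
    by rewrite addn0 !addr0.
  have -> : (j.+1 * s <= n)%N = false by rewrite mulSn; lia.
  by rewrite !addr0.
rewrite (eq_bigr _ (fun j _ => congr1 (fun x => (-1) ^+ j * x) (H j))).
rewrite (@telescope (fun j => b j + b j.+1 + c j.+1) b c) // big_nat_recr //=.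
have hn : (n.+1 <= n.+1 * s)%N := leq_pmulr _ s0.
have -> : b n.+1 = 0 by rewrite /b NqZ_eval; case: leqP => //; lia.
have -> : c n.+1 = 0 by rewrite /c qZ_eval; case: leqP => //; lia.
rewrite /b mul0n subr0 /c.
by rewrite mulr0 subr0 mulr0 addr0.
Qed.
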